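(* Consider problem (PI): minimize $f(x)$ subject to $x\in X$, $g_i(x)\le 0$, $i=1,\dots,m$, where $\Gamma\subseteq\mathbb R^n$ is an open convex set and $X\subseteq\Gamma$ is convex. Let $\bar S$ be its solution set and $\bar x\in\bar S$. Assume $f:\Gamma\to\mathbb R$ is continuously differentiable and quasiconvex on $\Gamma$, $g_i$ for $i\in I(\bar x)$ are differentiable and quasiconvex on $\Gamma$, $g_i$ for $i\notin I(\bar x)$ are continuous at $\bar x$, $\nabla f(\bar x)\ne 0$, GMFCQ holds at $\bar x$, and $\lambda$ is a (fixed) KKT multiplier at $\bar x$. Define \[ \hat S_1'(\lambda):=\Big\{x\in X_1(\lambda)\ \Big|\ \nabla f(\bar x)^T(x-\bar x)=0,\ \nabla f(x)\ne0,\ \tfrac{\nabla f(x)}{\|\nabla f(x)\|}=\tfrac{\nabla f(\bar x)}{\|\nabla f(\bar x)\|}\Big\}, \] \[ \hat S_2'(\lambda):=\Big\{x\in X_1(\lambda)\ \Big|\ \nabla f(\bar x)^T(x-\bar x)\le0,\ \nabla f(x)\ne0,\ \tfrac{\nabla f(x)}{\|\nabla f(x)\|}=\tfrac{\nabla f(\bar x)}{\|\nabla f(\bar x)\|}\Big\}. \] Then $\bar S=\hat S_1'(\lambda)=\hat S_2'(\lambda)$.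
   Context: Quasiconvexity on $\Gamma$: $f(x+t(y-x))\le\max\{f(x),f(y)\}$ for all $x,y\in\Gamma$, $t\in[0,1]$. Feasible set $S:=\{x\in X\mid g_i(x)\le0,\ i=1,\dots,m\}$; $\bar S$ the set of global minimizers of $f$ on $S$. Active index set $I(x):=\{i\mid g_i(x)=0\}$. For a cone $C$, its negative polar is $C^*:=\{x\in\mathbb R^n\mid c^Tx\le 0\ \forall c\in C\}$; $T_X(x)$ is the tangent cone of $X$ at $x$ and $N_X(x):=(T_X(x))^*$ is the normal cone. GMFCQ holds at $\bar x$ iff there is $y\in (N_X(\bar x))^*$ with $\nabla g_i(\bar x)^Ty<0$ for all $i\in I(\bar x)$. A KKT multiplier at $\bar x$ is $\lambda\in\mathbb R^m$ with $\lambda_i\ge0$ for all $i$, $\lambda_ig_i(\bar x)=0$ for all $i$, and $\big[\nabla f(\bar x)+\sum_{i\in I(\bar x)}\lambda_i\nabla g_i(\bar x)\big]^T(x-\bar x)\ge0$ for all $x\in X$. Define $\tilde I(\bar x,\lambda):=\{i\mid g_i(\bar x)=0,\ \lambda_i>0\}$ and $X_1(\lambda):=\{x\in X\mid g_i(x)=0\ \forall i\in\tilde I(\bar x,\lambda),\ g_i(x)\le0\ \forall i\notin\tilde I(\bar x,\lambda)\}$. *)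

(* Defs.v *)
From mathcomp Require Import ssreflect ssrfun ssrbool eqtype ssrnat seq fintype bigop.
From Stdlib Require Import Reals.
Open Scope R_scope.

Definition vec (n : nat) := 'I_n -> R.

Definition vsub {n} (u v : vec n) : vec n := fun j => u j - v j.
Definition vadd {n} (u v : vec n) : vec n := fun j => u j + v j.
Definition vscale {n} (a : R) (u : vec n) : vec n := fun j => a * u j.
Definition vzero {n} : vec n := fun _ => 0.

Definition dot {n} (u v : vec n) : R := \big[Rplus/0]_(j < n) (u j * v j).
Definition norm {n} (u : vec n) : R := sqrt (dot u u).

Definition vopen_set {n} (G : vec n -> Prop) : Prop :=
  forall x, G x -> exists r, 0 < r /\ forall y, norm (vsub y x) < r -> G y.

Definition vconvex_set {n} (C : vec n -> Prop) : Prop :=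
  forall x y t, C x -> C y -> 0 <= t <= 1 -> C (vadd x (vscale t (vsub y x))).

Definition quasiconvex_on {n} (G : vec n -> Prop) (f : vec n -> R) : Prop :=
  forall x y t, G x -> G y -> 0 <= t <= 1 ->
    f (vadd x (vscale t (vsub y x))) <= Rmax (f x) (f y).

Definition is_gradient {n} (f : vec n -> R) (x v : vec n) : Prop :=
  forall eps, 0 < eps -> exists delta, 0 < delta /\
    forall y, norm (vsub y x) < delta ->
      Rabs (f y - f x - dot v (vsub y x)) <= eps * norm (vsub y x).

Definition continuous_at_sc {n} (f : vec n -> R) (x : vec n) : Prop :=
  forall eps, 0 < eps -> exists delta, 0 < delta /\
    forall y, norm (vsub y x) < delta -> Rabs (f y - f x) < eps.

Definition continuous_at_vec {n} (F : vec n -> vec n) (x : vec n) : Prop :=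
  forall eps, 0 < eps -> exists delta, 0 < delta /\
    forall y, norm (vsub y x) < delta -> norm (vsub (F y) (F x)) < eps.

Definition vcv {n} (d : nat -> vec n) (l : vec n) : Prop :=
  forall eps, 0 < eps -> exists N : nat, forall k : nat, (N <= k)%coq_nat ->
    norm (vsub (d k) l) < eps.

Definition tangent_cone {n} (X : vec n -> Prop) (x : vec n) : vec n -> Prop :=
  fun d => exists (t : nat -> R) (dk : nat -> vec n),
    (forall k, 0 < t k) /\ Un_cv t 0 /\ vcv dk d /\
    (forall k, X (vadd x (vscale (t k) (dk k)))).

Definition polar {n} (C : vec n -> Prop) : vec n -> Prop :=
  fun y => forall c, C c -> dot c y <= 0.

Definition normal_cone {n} (X : vec n -> Prop) (x : vec n) : vec n -> Prop :=
  polar (tangent_cone X x).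

Definition feasible {n m} (X : vec n -> Prop) (g : 'I_m -> vec n -> R) : vec n -> Prop :=
  fun x => X x /\ forall i, g i x <= 0.

Definition solution_set {n m} (f : vec n -> R) (X : vec n -> Prop)
  (g : 'I_m -> vec n -> R) : vec n -> Prop :=
  fun x => feasible X g x /\ forall y, feasible X g y -> f x <= f y.

Definition active {n m} (g : 'I_m -> vec n -> R) (x : vec n) (i : 'I_m) : Prop :=
  g i x = 0.

Definition GMFCQ {n m} (X : vec n -> Prop) (g : 'I_m -> vec n -> R)
  (gradg : 'I_m -> vec n -> vec n) (xb : vec n) : Prop :=
  exists y, polar (normal_cone X xb) y /\
    forall i, active g xb i -> dot (gradg i xb) y < 0.

Definition lagr_grad {n m} (gradf : vec n -> vec n) (g : 'I_m -> vec n -> R)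
  (gradg : 'I_m -> vec n -> vec n) (lam : 'I_m -> R) (xb : vec n) : vec n :=
  fun j => gradf xb j +
    \big[Rplus/0]_(i < m)
      (if Req_EM_T (g i xb) 0 then lam i * gradg i xb j else 0).

Definition KKT_multiplier {n m} (X : vec n -> Prop) (gradf : vec n -> vec n)
  (g : 'I_m -> vec n -> R) (gradg : 'I_m -> vec n -> vec n)
  (xb : vec n) (lam : 'I_m -> R) : Prop :=
  (forall i, 0 <= lam i) /\ (forall i, lam i * g i xb = 0) /\
  (forall x, X x -> dot (lagr_grad gradf g gradg lam xb) (vsub x xb) >= 0).

Definition Itilde {n m} (g : 'I_m -> vec n -> R) (lam : 'I_m -> R) (xb : vec n)
  (i : 'I_m) : Prop := g i xb = 0 /\ 0 < lam i.

Definition X1 {n m} (X : vec n -> Prop) (g : 'I_m -> vec n -> R)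
  (lam : 'I_m -> R) (xb : vec n) : vec n -> Prop :=
  fun x => X x /\ (forall i, Itilde g lam xb i -> g i x = 0) /\
    (forall i, ~ Itilde g lam xb i -> g i x <= 0).

Definition S1hat' {n m} (X : vec n -> Prop) (g : 'I_m -> vec n -> R)
  (gradf : vec n -> vec n) (lam : 'I_m -> R) (xb : vec n) : vec n -> Prop :=
  fun x => X1 X g lam xb x /\ dot (gradf xb) (vsub x xb) = 0 /\
    gradf x <> vzero /\
    vscale (/ norm (gradf x)) (gradf x) = vscale (/ norm (gradf xb)) (gradf xb).

Definition S2hat' {n m} (X : vec n -> Prop) (g : 'I_m -> vec n -> R)
  (gradf : vec n -> vec n) (lam : 'I_m -> R) (xb : vec n) : vec n -> Prop :=
  fun x => X1 X g lam xb x /\ dot (gradf xb) (vsub x xb) <= 0 /\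
    gradf x <> vzero /\
    vscale (/ norm (gradf x)) (gradf x) = vscale (/ norm (gradf xb)) (gradf xb).

(* Main.v *)
From HB Require Import structures.
Require Import Defs.
From mathcomp Require Import ssreflect ssrfun ssrbool eqtype ssrnat seq fintype bigop.
From Stdlib Require Import Reals Lra FunctionalExtensionality.
Open Scope R_scope.
Lemma Rplus_assoc' : associative Rplus. Proof. by move=> a b c; rewrite Rplus_assoc. Qed.
HB.instance Definition _ := Monoid.isComLaw.Build R 0 Rplus Rplus_assoc' Rplus_comm Rplus_0_l.

Lemma sum_add n (F G : 'I_n -> R) :
  \big[Rplus/0]_(j < n) (F j + G j) = \big[Rplus/0]_(j < n) F j + \big[Rplus/0]_(j < n) G j.
Proof. exact: (big_split (Rplus : Monoid.com_law 0)). Qed.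

Lemma sum_scal n (c : R) (F : 'I_n -> R) :
  \big[Rplus/0]_(j < n) (c * F j) = c * \big[Rplus/0]_(j < n) F j.
Proof.
symmetry; apply: (big_morph (Rmult c)).
- by move=> a b; rewrite Rmult_plus_distr_l.
- by rewrite Rmult_0_r.
Qed.

Lemma sum_swap n m (F : 'I_m -> 'I_n -> R) :
  \big[Rplus/0]_(j < n) \big[Rplus/0]_(i < m) F i j =
  \big[Rplus/0]_(i < m) \big[Rplus/0]_(j < n) F i j.
Proof. exact: (exchange_big_dep xpredT). Qed.

Lemma sum_ge0 n (F : 'I_n -> R) : (forall j, 0 <= F j) -> 0 <= \big[Rplus/0]_(j < n) F j.
Proof.
move=> H; apply: (big_ind (fun x => 0 <= x)); [lra | move=> a b ? ?; lra | by move=> i _].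
Qed.

Lemma sum_le0 n (F : 'I_n -> R) : (forall j, F j <= 0) -> \big[Rplus/0]_(j < n) F j <= 0.
Proof.
move=> H; apply: (big_ind (fun x => x <= 0)); [lra | move=> a b ? ?; lra | by move=> i _].
Qed.

Lemma sum_le0_eq n (F : 'I_n -> R) : (forall j, F j <= 0) ->
  0 <= \big[Rplus/0]_(j < n) F j -> forall j, F j = 0.
Proof.
move=> H Hs j. rewrite (bigD1 j) // in Hs.
move: Hs; set S := bigop _ _ _ => Hs.
have : S <= 0.
  rewrite /S; apply: (big_ind (fun x : R => Rle x 0)). apply Rle_refl. move=> a b ? ?. simpl. lra. move=> i _; apply H. move=> HS. move: Hs. simpl. have := H j. lra.
Qed.

Lemma dot_comm {n} (u v : vec n) : dot u v = dot v u.
Proof. rewrite /dot; apply: eq_bigr => j _; ring. Qed.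

Lemma dot_add_r {n} (u v w : vec n) : dot u (vadd v w) = dot u v + dot u w.
Proof. rewrite /dot -sum_add; apply: eq_bigr => j _; rewrite /vadd; ring. Qed.

Lemma dot_sub_r {n} (u v w : vec n) : dot u (vsub v w) = dot u v - dot u w.
Proof.
rewrite /dot.
have -> : \big[Rplus/0]_(j < n) (u j * vsub v w j) =
  \big[Rplus/0]_(j < n) (u j * v j + (-1) * (u j * w j)).
  apply: eq_bigr => j _; rewrite /vsub; ring.
rewrite sum_add sum_scal; ring.
Qed.

Lemma dot_scale_r {n} (u v : vec n) a : dot u (vscale a v) = a * dot u v.
Proof. rewrite /dot -sum_scal; apply: eq_bigr => j _; rewrite /vscale; ring. Qed.

Lemma dot_add_l {n} (u v w : vec n) : dot (vadd v w) u = dot v u + dot w u.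
Proof. by rewrite dot_comm dot_add_r !(dot_comm u). Qed.
Lemma dot_sub_l {n} (u v w : vec n) : dot (vsub v w) u = dot v u - dot w u.
Proof. by rewrite dot_comm dot_sub_r !(dot_comm u). Qed.
Lemma dot_scale_l {n} (u v : vec n) a : dot (vscale a v) u = a * dot v u.
Proof. by rewrite dot_comm dot_scale_r (dot_comm u). Qed.

Lemma dot_zero_l {n} (u : vec n) : dot vzero u = 0.
Proof.
have -> : (vzero : vec n) = vscale 0 u by apply: functional_extensionality => j; rewrite /vscale /vzero; ring.
rewrite dot_scale_l; ring.
Qed.

Lemma dot_self_ge0 {n} (u : vec n) : 0 <= dot u u.
Proof. apply: sum_ge0 => j; nra. Qed.

Lemma dot_self_zero {n} (u : vec n) : dot u u = 0 -> u = vzero.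
Proof.
move=> H; apply: functional_extensionality => j.
have K := @sum_le0_eq n (fun j => - (u j * u j)).
have E : \big[Rplus/0]_(j0 < n) (- (u j0 * u j0)) = -1 * dot u u.
  rewrite /dot -sum_scal; apply: eq_bigr => i _; ring.
rewrite E H in K.
have := K (fun j => ltac:(nra)) ltac:(lra) j.
rewrite /vzero; nra.
Qed.

Lemma dot_self_pos {n} (u : vec n) : u <> vzero -> 0 < dot u u.
Proof.
move=> H; have := dot_self_ge0 u; case/Rle_lt_or_eq_dec => // E.
by exfalso; apply: H; apply: dot_self_zero.
Qed.

Lemma norm_scale {n} (u : vec n) a : norm (vscale a u) = Rabs a * norm u.
Proof.
rewrite /norm dot_scale_l dot_scale_r -Rmult_assoc.
rewrite sqrt_mult_alt; last by nra.
by rewrite sqrt_Rsqr_abs.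
Qed.

Lemma norm_pos {n} (u : vec n) : u <> vzero -> 0 < norm u.
Proof. move=> H; apply: sqrt_lt_R0; exact: dot_self_pos. Qed.

Lemma norm_ge0 {n} (u : vec n) : 0 <= norm u.
Proof. apply: sqrt_pos. Qed.

Lemma norm_sq {n} (u : vec n) : norm u * norm u = dot u u.
Proof. apply: sqrt_sqrt; apply: dot_self_ge0. Qed.

Lemma vsub_vadd {n} (x d : vec n) t : vsub (vadd x (vscale t d)) x = vscale t d.
Proof. apply: functional_extensionality => j; rewrite /vsub /vadd /vscale; ring. Qed.

Lemma DQ {n} {f : vec n -> R} {x v} : is_gradient f x v ->
  forall d eps, 0 < eps -> exists T, 0 < T /\ forall t, 0 < t < T ->
  Rabs (f (vadd x (vscale t d)) - f x - t * dot v d) <= eps * t.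
Proof.
move=> Hg d eps Heps.
have Hn := norm_ge0 d.
have He' : 0 < eps / (norm d + 1) by apply: Rdiv_lt_0_compat; lra.
have [delta [Hd Hdel]] := Hg _ He'.
exists (delta / (norm d + 1)); split; first by apply: Rdiv_lt_0_compat; lra.
move=> t [Ht1 Ht2].
have Hnt : norm (vsub (vadd x (vscale t d)) x) = t * norm d.
  by rewrite vsub_vadd norm_scale Rabs_pos_eq; lra.
have Hlt : t * norm d < delta.
  have : t * (norm d + 1) < delta.
    apply (Rmult_lt_compat_r (norm d + 1)) in Ht2; last lra.
    by rewrite /Rdiv Rmult_assoc Rinv_l in Ht2; lra.
  nra.
have := Hdel (vadd x (vscale t d)); rewrite Hnt => K.
have {K} K := K Hlt.
rewrite vsub_vadd dot_scale_r in K.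
apply: (Rle_trans _ _ _ K).
have -> : eps / (norm d + 1) * (t * norm d) = eps * t * (norm d / (norm d + 1)) by field; lra.
have : norm d / (norm d + 1) <= 1.
  have Hp : 0 < norm d + 1 by lra.
  apply (Rmult_le_reg_r (norm d + 1)); first lra.
  rewrite /Rdiv Rmult_assoc Rinv_l; lra.
have : 0 <= eps * t by nra.
nra.
Qed.

Lemma DC {n} {f : vec n -> R} {x v} : is_gradient f x v ->
  forall d eta, 0 < eta -> exists T, 0 < T /\ forall t, 0 < t < T ->
  Rabs (f (vadd x (vscale t d)) - f x) < eta.
Proof.
move=> Hg d eta He.
have [T [HT H]] := DQ Hg d 1 Rlt_0_1.
have Ha := Rabs_pos (dot v d).
exists (Rmin T (eta / (Rabs (dot v d) + 1))); split.
  apply: Rmin_glb_lt => //; apply: Rdiv_lt_0_compat; lra.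
move=> t [Ht1 Ht2].
have HtT : t < T by apply: (Rlt_le_trans _ _ _ Ht2); apply: Rmin_l.
have Hte : t < eta / (Rabs (dot v d) + 1) by apply: (Rlt_le_trans _ _ _ Ht2); apply: Rmin_r.
have K := H t (conj Ht1 HtT).
have K2 : t * (Rabs (dot v d) + 1) < eta.
  apply (Rmult_lt_compat_r (Rabs (dot v d) + 1)) in Hte; last lra.
  by rewrite /Rdiv Rmult_assoc Rinv_l in Hte; lra.
have K3 : Rabs (t * dot v d) = t * Rabs (dot v d) by rewrite Rabs_mult Rabs_pos_eq; lra.
have := Rabs_triang (f (vadd x (vscale t d)) - f x - t * dot v d) (t * dot v d).
have -> : f (vadd x (vscale t d)) - f x - t * dot v d + t * dot v d = f (vadd x (vscale t d)) - f x by ring.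
lra.
Qed.

Lemma GO {n} {G : vec n -> Prop} {x} : vopen_set G -> G x ->
  forall d, exists T, 0 < T /\ forall t, 0 <= t < T -> G (vadd x (vscale t d)).
Proof.
move=> Ho Gx d.
have [r [Hr H]] := Ho x Gx.
have Hn := norm_ge0 d.
exists (r / (norm d + 1)); split; first by apply: Rdiv_lt_0_compat; lra.
move=> t [Ht1 Ht2]; apply: H.
rewrite vsub_vadd norm_scale Rabs_pos_eq //.
have : t * (norm d + 1) < r.
  apply (Rmult_lt_compat_r (norm d + 1)) in Ht2; last lra.
  by rewrite /Rdiv Rmult_assoc Rinv_l in Ht2; lra.
nra.
Qed.

Lemma GI {n} {G : vec n -> Prop} {f : vec n -> R} {x y v} : quasiconvex_on G f ->
  G x -> G y -> is_gradient f x v -> f y <= f x -> dot v (vsub y x) <= 0.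
Proof.
move=> Hq Gx Gy Hg Hle.
apply: Rnot_lt_le => Hk.
have [T [HT H]] := DQ Hg (vsub y x) (dot v (vsub y x) / 2) ltac:(lra).
set t := Rmin (T / 2) (1 / 2).
have Ht0 : 0 < t by apply: Rmin_glb_lt; lra.
have HtT : t < T by have := Rmin_l (T/2) (1/2); rewrite -/t; lra.
have Ht1 : t <= 1 by have := Rmin_r (T/2) (1/2); rewrite -/t; lra.
have K := H t (conj Ht0 HtT).
have Q := Hq x y t Gx Gy (conj (Rlt_le _ _ Ht0) Ht1).
rewrite Rmax_left in Q => //.
have := Rle_abs (- (f (vadd x (vscale t (vsub y x))) - f x - t * dot v (vsub y x))).
rewrite Rabs_Ropp. nra.
Qed.

Lemma DD {n} {f : vec n -> R} {x v} d : is_gradient f x v -> dot v d < 0 ->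
  forall T0, 0 < T0 -> exists t, 0 < t < T0 /\ f (vadd x (vscale t d)) < f x.
Proof.
move=> Hg Hd T0 HT0.
have [T [HT H]] := DQ Hg d (- dot v d / 2) ltac:(lra).
exists (Rmin T T0 / 2).
have Hm : 0 < Rmin T T0 by apply: Rmin_glb_lt.
have Hm1 := Rmin_l T T0. have Hm2 := Rmin_r T T0.
split; first lra.
have K := H (Rmin T T0 / 2) ltac:(lra).
have := Rle_abs (f (vadd x (vscale (Rmin T T0 / 2) d)) - f x - Rmin T T0 / 2 * dot v d).
nra.
Qed.

Definition Tterm {n m} (g : 'I_m -> vec n -> R) (gradg : 'I_m -> vec n -> vec n)
  (lam : 'I_m -> R) (xb w : vec n) (i : 'I_m) : R :=
  if Req_EM_T (g i xb) 0 then lam i * dot (gradg i xb) w else 0.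

Lemma KKT_split {n m} (gradf : vec n -> vec n) g gradg lam (xb w : vec n) :
  dot (lagr_grad gradf g gradg lam xb) w =
  dot (gradf xb) w + \big[Rplus/0]_(i < m) Tterm g gradg lam xb w i.
Proof.
rewrite /dot /lagr_grad.
have -> : \big[Rplus/0]_(j < n) ((gradf xb j + \big[Rplus/0]_(i < m)
     (if Req_EM_T (g i xb) 0 then lam i * gradg i xb j else 0)) * w j) =
  \big[Rplus/0]_(j < n) (gradf xb j * w j + \big[Rplus/0]_(i < m)
     ((if Req_EM_T (g i xb) 0 then lam i * gradg i xb j else 0) * w j)).
  apply: eq_bigr => j _.
  rewrite Rmult_plus_distr_r; congr (_ + _).
  rewrite Rmult_comm -sum_scal; apply: eq_bigr => i _; ring.
rewrite sum_add sum_swap; congr (_ + _).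
apply: eq_bigr => i _; rewrite /Tterm /dot.
case: (Req_EM_T (g i xb) 0) => HH /=.
  rewrite -sum_scal; apply: eq_bigr => j _; ring.
have -> : \big[Rplus/0]_(j < n) (0 * w j) = 0 * \big[Rplus/0]_(j < n) w j by rewrite sum_scal.
ring.
Qed.

Lemma Tterm_le0 {n m} (g : 'I_m -> vec n -> R) gradg lam xb w :
  (forall i, 0 <= lam i) ->
  (forall i, Itilde g lam xb i -> dot (gradg i xb) w <= 0) ->
  forall i, Tterm g gradg lam xb w i <= 0.
Proof.
move=> Hl Hi i; rewrite /Tterm.
case: (Req_EM_T (g i xb) 0) => E /=; last lra.
case: (Rle_lt_or_eq_dec _ _ (Hl i)) => L.
  have := Hi i (conj E L); nra.
rewrite -L; lra.
Qed.

From Stdlib Require Import Classical.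

Lemma pick_t {T1 T2 : R} : 0 < T1 -> 0 < T2 ->
  exists t, 0 < t /\ t < T1 /\ t < T2.
Proof.
move=> H1 H2; exists (Rmin T1 T2 / 2).
have := Rmin_l T1 T2; have := Rmin_r T1 T2; have : 0 < Rmin T1 T2 by apply: Rmin_glb_lt.
lra.
Qed.

Lemma near_pos {n} (a b : vec n) :
  dot (vsub a b) (vsub a b) < dot b b / 4 -> dot b b / 2 < dot a b.
Proof.
move=> H.
have H2 := dot_self_ge0 (vsub a (vscale (1/2) b)).
rewrite !dot_sub_l !dot_sub_r in H.
rewrite !dot_sub_l !dot_sub_r !dot_scale_l !dot_scale_r in H2.
rewrite (dot_comm b a) in H H2.
lra.
Qed.

Lemma S2_sol (n m : nat) (Gamma X : vec n -> Prop)
  (f : vec n -> R) (gradf : vec n -> vec n)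
  (g : 'I_m -> vec n -> R) (gradg : 'I_m -> vec n -> vec n)
  (xb : vec n) (lam : 'I_m -> R) :
  vopen_set Gamma -> (forall x, X x -> Gamma x) ->
  solution_set f X g xb ->
  (forall x, Gamma x -> is_gradient f x (gradf x)) ->
  quasiconvex_on Gamma f ->
  (forall i, active g xb i ->
     (forall x, Gamma x -> is_gradient (g i) x (gradg i x)) /\
     quasiconvex_on Gamma (g i)) ->
  gradf xb <> vzero ->
  KKT_multiplier X gradf g gradg xb lam ->
  forall x, S2hat' X g gradf lam xb x ->
  solution_set f X g x /\ dot (gradf xb) (vsub x xb) = 0.
Proof.
move=> HGo HXG Hsol Hgr Hqf Hact Hg0 [Hl [Hcs Hkkt]].
have Gxb : Gamma xb by apply: HXG; case: Hsol => [[]].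
move=> x [[HXx [Hit Hnit]] [Hdle [Hvnz Hnorm]]].
have Hfeas : feasible X g x.
  split => // i; case: (classic (Itilde g lam xb i)) => Hi.
    by rewrite (Hit i Hi); lra.
  exact: Hnit.
have Gx := HXG x HXx.
have Hit2 : forall i, Itilde g lam xb i -> dot (gradg i xb) (vsub x xb) <= 0.
  move=> i [Ha Hp]; have [Hgi Hqi] := Hact i Ha.
  apply: (GI Hqi Gxb Gx (Hgi xb Gxb)).
  rewrite Ha (Hit i (conj Ha Hp)); lra.
have Hsum := Hkkt x HXx; rewrite KKT_split in Hsum.
have Hs0 : \big[Rplus/0]_(i < m) Tterm g gradg lam xb (vsub x xb) i <= 0.
  by apply: sum_le0; apply: Tterm_le0.
have Hd0 : dot (gradf xb) (vsub x xb) = 0 by lra.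
split; last done.
set nv := norm (gradf x); set ng := norm (gradf xb).
have Hnv : 0 < nv by apply: norm_pos.
have Hng : 0 < ng by apply: norm_pos.
have Hv : forall j, gradf x j = (nv / ng) * gradf xb j.
  move=> j; have := f_equal (fun h => h j) Hnorm; rewrite /vscale -/nv -/ng => E.
  have -> : gradf x j = nv * (/ nv * gradf x j) by field; lra.
  rewrite E; field; lra.
have Hvdot : forall u, dot (gradf x) u = (nv / ng) * dot (gradf xb) u.
  move=> u; rewrite /dot -sum_scal; apply: eq_bigr => j _; rewrite Hv; ring.
split => // y Hy.
suff : f x <= f xb by have := (proj2 Hsol) y Hy; lra.
apply: Rnot_lt_le => Hlt.
have [T1 [HT1 HC]] := DC (Hgr xb Gxb) (gradf x) (f x - f xb) ltac:(lra).
have [T2 [HT2 HOp]] := GO HGo Gxb (gradf x).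
have [t [Ht [Ht1 Ht2]]] := pick_t HT1 HT2.
have Gy := HOp t ltac:(lra).
have Hfy := HC t ltac:(lra).
have Hfy' : f (vadd xb (vscale t (gradf x))) <= f x.
  have := Rle_abs (f (vadd xb (vscale t (gradf x))) - f xb); lra.
have := GI Hqf Gx Gy (Hgr x Gx) Hfy'.
rewrite dot_sub_r dot_add_r dot_scale_r.
have := Hvdot (vsub x xb); rewrite Hd0 dot_sub_r => E.
have := @dot_self_pos _ _ Hvnz.
nra.
Qed.

Lemma Sol_S1 (n m : nat) (Gamma X : vec n -> Prop)
  (f : vec n -> R) (gradf : vec n -> vec n)
  (g : 'I_m -> vec n -> R) (gradg : 'I_m -> vec n -> vec n)
  (xb : vec n) (lam : 'I_m -> R) :
  vopen_set Gamma -> vconvex_set Gamma ->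
  vconvex_set X -> (forall x, X x -> Gamma x) ->
  solution_set f X g xb ->
  (forall x, Gamma x -> is_gradient f x (gradf x)) ->
  (forall x, Gamma x -> continuous_at_vec gradf x) ->
  quasiconvex_on Gamma f ->
  (forall i, active g xb i ->
     (forall x, Gamma x -> is_gradient (g i) x (gradg i x)) /\
     quasiconvex_on Gamma (g i)) ->
  gradf xb <> vzero ->
  GMFCQ X g gradg xb ->
  KKT_multiplier X gradf g gradg xb lam ->
  forall x, solution_set f X g x -> S1hat' X g gradf lam xb x.
Proof.
move=> HGo HGc HXc HXG Hsol Hgr Hcont Hqf Hact Hg0 [yy [_ Hyy]] [Hl [Hcs Hkkt]].
have Gxb : Gamma xb by apply: HXG; case: Hsol => [[]].
move=> x [[HXx Hgx] Hmin].
have Gx := HXG x HXx.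
have Hfe : f x = f xb.
  have := Hmin xb (proj1 Hsol); have := (proj2 Hsol) x (conj HXx Hgx); lra.
set w := vsub x xb.
set gb := gradf xb.
have Hdle : dot gb w <= 0 by apply: (GI Hqf Gxb Gx (Hgr xb Gxb)); lra.
have Hit2 : forall i, Itilde g lam xb i -> dot (gradg i xb) w <= 0.
  move=> i [Ha Hp]; have [Hgi Hqi] := Hact i Ha.
  apply: (GI Hqi Gxb Gx (Hgi xb Gxb)).
  rewrite Ha; exact: Hgx.
have Hsum := Hkkt x HXx; rewrite KKT_split -/w -/gb in Hsum.
have HTl := @Tterm_le0 _ _ g gradg lam xb w Hl Hit2.
have Hs0 : \big[Rplus/0]_(i < m) Tterm g gradg lam xb w i <= 0 by apply: sum_le0.
have Hd0 : dot gb w = 0 by lra.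
have HT0 := @sum_le0_eq _ _ HTl ltac:(lra).
have Hq0 : forall i, Itilde g lam xb i -> dot (gradg i xb) w = 0.
  move=> i [Ha Hp]; have := HT0 i; rewrite /Tterm.
  case: (Req_EM_T (g i xb) 0) => E /=; last by [].
  move=> K; have := Rmult_integral _ _ K; case => // ?; lra.
have Hgg : 0 < dot gb gb by apply: dot_self_pos.
have HX1 : X1 X g lam xb x.
  split => //; split; last by move=> i _; apply: Hgx.
  move=> i Hi; have [Ha Hp] := Hi.
  have [Hgi Hqi] := Hact i Ha.
  case: (Rle_lt_or_eq_dec _ _ (Hgx i)) => // Hlt.
  exfalso.
  have Hqy := Hyy i Ha.
  set d := vscale (-1) yy.
  have [T1 [HT1 HC]] := DC (Hgi x Gx) d (- g i x) ltac:(lra).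
  have [T2 [HT2 HOp]] := GO HGo Gx d.
  have [t [Ht [Ht1 Ht2]]] := pick_t HT1 HT2.
  have Gz := HOp t ltac:(lra).
  have Hz : g i (vadd x (vscale t d)) <= g i xb.
    have := Rle_abs (g i (vadd x (vscale t d)) - g i x); have := HC t ltac:(lra).
    rewrite Ha; lra.
  have := GI Hqi Gxb Gz (Hgi xb Gxb) Hz.
  rewrite dot_sub_r dot_add_r dot_scale_r /d dot_scale_r.
  have := Hq0 i Hi; rewrite /w dot_sub_r.
  nra.
have Hc0 : forall s, 0 <= s <= 1 -> f (vadd xb (vscale s w)) = f xb.
  move=> s Hs.
  have Gz : Gamma (vadd xb (vscale s w)) by apply: HGc.
  have Hle : f (vadd xb (vscale s w)) <= f xb.
    have H1 := Hqf xb x s Gxb Gx Hs; rewrite -/w Rmax_left in H1; lra.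
  apply: Rle_antisym => //; apply: Rnot_lt_le => Hlt.
  have [T1 [HT1 HC]] := DC (Hgr _ Gz) gb (f xb - f (vadd xb (vscale s w))) ltac:(lra).
  have [T2 [HT2 HOp]] := GO HGo Gz gb.
  have [t [Ht [Ht1 Ht2]]] := pick_t HT1 HT2.
  have Gy := HOp t ltac:(lra).
  have Hy : f (vadd (vadd xb (vscale s w)) (vscale t gb)) <= f xb.
    have := Rle_abs (f (vadd (vadd xb (vscale s w)) (vscale t gb)) - f (vadd xb (vscale s w))).
    have := HC t ltac:(lra); lra.
  have := GI Hqf Gxb Gy (Hgr xb Gxb) Hy.
  rewrite dot_sub_r !dot_add_r !dot_scale_r Hd0.
  rewrite -/gb; nra.
have Hng : 0 < norm gb by apply: norm_pos.
have Hvnz : gradf x <> vzero.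
  move=> Hv0.
  have Hclaim : forall s, 0 < s <= 1 -> dot (gradf (vadd xb (vscale s w))) gb <= 0.
    move=> s Hs.
    set z := vadd xb (vscale s w).
    have Gz : Gamma z by apply: HGc => //; lra.
    set k := dot (gradf z) gb.
    apply: Rnot_lt_le => Hk.
    have [T1 [HT1 H1]] := DQ (Hgr z Gz) gb (k / 2) ltac:(lra).
    have [T2 [HT2 H2]] := DQ (Hgr x Gx) gb (s * k / 4) ltac:(nra).
    have [T3 [HT3 H3]] := GO HGo Gx gb.
    have [t0 [Ht0 [Ht01 Ht02]]] := pick_t HT2 HT3.
    have [t [Ht [Ht1 Ht2]]] := pick_t HT1 Ht0.
    have Gy := H3 t ltac:(lra).
    have Hup : f (vadd x (vscale t gb)) <= f xb + s * k / 4 * t.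
      have := H2 t ltac:(lra); rewrite Hv0 dot_zero_l Hfe => K.
      have := Rle_abs (f (vadd x (vscale t gb)) - f xb - t * 0); lra.
    have Hid : vadd z (vscale (s * t) gb) = vadd xb (vscale s (vsub (vadd x (vscale t gb)) xb)).
      apply: functional_extensionality => j; rewrite /z /w /vadd /vscale /vsub; ring.
    have Hq := Hqf xb (vadd x (vscale t gb)) s Gxb Gy ltac:(lra).
    rewrite -Hid in Hq.
    have Hlo := H1 (s * t) ltac:(nra).
    have := Rle_abs (- (f (vadd z (vscale (s * t) gb)) - f z - s * t * k)).
    rewrite Rabs_Ropp.
    have Hfz : f z = f xb by apply: Hc0; lra.
    have Hmx : Rmax (f xb) (f (vadd x (vscale t gb))) <= f xb + s * k / 4 * t.
      have Hskt : 0 < s * k * t by apply: Rmult_lt_0_compat; [nra | lra].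
      apply: Rmax_lub; lra.
    have Hskt : 0 < s * k * t by apply: Rmult_lt_0_compat; [nra | lra].
    move=> Hab; rewrite -/k in Hlo; lra.
  have [de [Hde Hc]] := Hcont xb Gxb (norm gb / 2) ltac:(lra).
  have Hnw := norm_ge0 w.
  set s := Rmin 1 (de / (2 * (norm w + 1))).
  have Hsp : 0 < s by apply: Rmin_glb_lt; [lra | apply: Rdiv_lt_0_compat; lra].
  have Hs1 : s <= 1 by apply: Rmin_l.
  have Hs2 : s <= de / (2 * (norm w + 1)) by apply: Rmin_r.
  have Hsd : s * norm w < de.
    have : s * (2 * (norm w + 1)) <= de.
      apply (Rmult_le_compat_r (2 * (norm w + 1))) in Hs2; last lra.
      by rewrite /Rdiv Rmult_assoc Rinv_l in Hs2; lra.
    nra.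
  have Hz := Hc (vadd xb (vscale s w)).
  rewrite vsub_vadd norm_scale Rabs_pos_eq in Hz; last lra.
  have {Hz} Hz := Hz Hsd.
  have He : dot (vsub (gradf (vadd xb (vscale s w))) gb) (vsub (gradf (vadd xb (vscale s w))) gb) < dot gb gb / 4.
    rewrite -/gb in Hz; rewrite -!norm_sq; have := norm_ge0 (vsub (gradf (vadd xb (vscale s w))) gb); nra.
  have H1 := near_pos _ _ He.
  have H2 := Hclaim s ltac:(lra).
  rewrite /gb in H1 H2 Hgg; lra.
set v := gradf x.
have Hvw : dot v (vsub xb x) = 0.
  apply: Rle_antisym.
    by apply: (GI Hqf Gx Gxb (Hgr x Gx)); lra.
  apply: Rnot_lt_le => Hlt.
  have [t [Ht Hft]] := DD _ (Hgr x Gx) Hlt 1 Rlt_0_1.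
  have Hid : vadd x (vscale t (vsub xb x)) = vadd xb (vscale (1 - t) w).
    apply: functional_extensionality => j; rewrite /w /vadd /vscale /vsub; ring.
  rewrite Hid Hc0 in Hft; lra.
have Hdesc : forall d, dot gb d < 0 -> dot v d <= 0.
  move=> d Hd.
  have [T [HT HOp]] := GO HGo Gxb d.
  have [t [Ht Hft]] := DD _ (Hgr xb Gxb) Hd T HT.
  have Gy := HOp t ltac:(lra).
  have := GI Hqf Gx Gy (Hgr x Gx) ltac:(rewrite Hfe; lra).
  rewrite dot_sub_r dot_add_r dot_scale_r.
  move: Hvw; rewrite dot_sub_r -/v => H1 H2. nra.
set be := dot v gb / dot gb gb.
set u := vsub v (vscale be gb).
have Hgu : dot gb u = 0.
  rewrite /u dot_sub_r dot_scale_r (dot_comm gb v) /be; field; lra.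
have Huu : dot u u = dot v u.
  rewrite {1}/u dot_sub_l dot_scale_l Hgu; ring.
have Hvg : 0 <= dot v gb.
  have := Hdesc (vscale (-1) gb); rewrite !dot_scale_r => K; have := K ltac:(lra); lra.
have Huu0 : dot u u = 0.
  apply: Rle_antisym; last by apply: dot_self_ge0.
  apply: Rnot_lt_le => Hp.
  have := Hdesc (vadd (vscale (-1) gb) (vscale ((dot v gb + 1) / dot u u) u)).
  rewrite dot_add_r !dot_scale_r Hgu dot_add_r !dot_scale_r -Huu => K.
  have := K ltac:(lra).
  have -> : (dot v gb + 1) / dot u u * dot u u = dot v gb + 1 by field; lra.
  lra.
have Hu0 := dot_self_zero _ Huu0.
have Hvj : forall j, v j = be * gb j.
  move=> j; have := f_equal (fun h => h j) Hu0; rewrite /u /vsub /vscale /vzero; lra.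
have Hbe : 0 < be.
  have Hb0 : 0 <= be by rewrite /be; apply: Rmult_le_pos; [lra | apply: Rlt_le; apply: Rinv_0_lt_compat; lra].
  case: (Rle_lt_or_eq_dec _ _ Hb0) => // E.
  exfalso; apply: Hvnz; apply: functional_extensionality => j.
  rewrite -/v Hvj -E /vzero; ring.
have Hvs : v = vscale be gb by apply: functional_extensionality => j; rewrite Hvj.
split => //; split; first by rewrite -/w -/gb Hd0.
split => //.
rewrite -/v Hvs norm_scale Rabs_pos_eq; last lra.
apply: functional_extensionality => j; rewrite /vscale -/gb; field; lra.
Qed.

Theorem theorem4 (n m : nat) (Gamma X : vec n -> Prop)
  (f : vec n -> R) (gradf : vec n -> vec n)
  (g : 'I_m -> vec n -> R) (gradg : 'I_m -> vec n -> vec n)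
  (xb : vec n) (lam : 'I_m -> R) :
  vopen_set Gamma -> vconvex_set Gamma ->
  vconvex_set X -> (forall x, X x -> Gamma x) ->
  solution_set f X g xb ->
  (* f continuously differentiable on Gamma with gradient gradf *)
  (forall x, Gamma x -> is_gradient f x (gradf x)) ->
  (forall x, Gamma x -> continuous_at_vec gradf x) ->
  quasiconvex_on Gamma f ->
  (* active constraints: differentiable and quasiconvex on Gamma *)
  (forall i, active g xb i ->
     (forall x, Gamma x -> is_gradient (g i) x (gradg i x)) /\
     quasiconvex_on Gamma (g i)) ->
  (* inactive constraints: continuous at xb *)
  (forall i, ~ active g xb i -> continuous_at_sc (g i) xb) ->
  gradf xb <> vzero ->
  GMFCQ X g gradg xb ->
  KKT_multiplier X gradf g gradg xb lam ->
  (forall x, solution_set f X g x <-> S1hat' X g gradf lam xb x) /\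
  (forall x, S1hat' X g gradf lam xb x <-> S2hat' X g gradf lam xb x).
Proof.
move=> HGo HGc HXc HXG Hsol Hgr Hcont Hqf Hact Hinact Hg0 Hmf Hkkt.
have S2S := @S2_sol n m Gamma X f gradf g gradg xb lam HGo HXG Hsol Hgr Hqf Hact Hg0 Hkkt.
have S12 : forall x, S1hat' X g gradf lam xb x -> S2hat' X g gradf lam xb x.
  move=> x [H1 [H2 H3]]; split => //; split => //; lra.
split => x; split.
- exact: (@Sol_S1 n m Gamma X f gradf g gradg xb lam HGo HGc HXc HXG Hsol Hgr Hcont Hqf Hact Hg0 Hmf Hkkt).
- by move=> H; have [] := S2S x (S12 x H).
- exact: S12.
- move=> H; have [_ E] := S2S x H.
  by case: H => [H1 [H2 H3]].
Qed.
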